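(* Let $D$ be the $N\times N$ matrix with all entries equal to $1/N$. For every choice model $\lambda$ on $S_N$ with $\|\lambda\|_0=k\le N$, one has $\|M(\lambda)-D\|_2\ge \sqrt{1-k/N}$. In particular, any choice model with support size $o(N)$ has $\|M(\lambda)-D\|_2\ge 1-o(1)$ as $N\to\infty$.
   Context: $S_N$ is the set of permutations of $\{1,\dots,N\}$; a choice model is a probability distribution $\lambda$ on $S_N$, $\|\lambda\|_0=|\{\sigma:\lambda(\sigma)>0\}|$, and $M_{ij}(\lambda)=\sum_{\sigma}\lambda(\sigma)\mathbf 1_{\{\sigma(i)=j\}}$. $\|A\|_2=(\sum_{i,j}A_{ij}^2)^{1/2}$. *)

(* Defs.v *)
From HB Require Import structures.
From mathcomp Require Import all_boot all_order all_algebra all_fingroup.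
Set Implicit Arguments. Unset Strict Implicit. Unset Printing Implicit Defensive.
Import Order.TTheory GRing.Theory Num.Theory.
Local Open Scope ring_scope.

Definition choice_model (R : numDomainType) (N : nat) (lam : {ffun 'S_N -> R}) : Prop :=
  (forall s, 0 <= lam s) /\ \sum_(s : 'S_N) lam s = 1.

Definition supp_size (R : numDomainType) (N : nat) (lam : {ffun 'S_N -> R}) : nat :=
  #|[set s : 'S_N | 0 < lam s]|.

Definition Mmat (R : numDomainType) (N : nat) (lam : {ffun 'S_N -> R}) : 'M[R]_N :=
  \matrix_(i < N, j < N) \sum_(s : 'S_N) lam s * (s i == j)%:R.

Definition Dmat (R : numFieldType) (N : nat) : 'M[R]_N :=
  \matrix_(i < N, j < N) (N%:R)^-1.

Definition frob (R : rcfType) (m n : nat) (A : 'M[R]_(m, n)) : R :=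
  Num.sqrt (\sum_(i < m) \sum_(j < n) A i j ^+ 2).

(* Main.v *)
Require Import Defs.
From HB Require Import structures.
From mathcomp Require Import all_boot all_order all_algebra all_fingroup.
Import Order.TTheory GRing.Theory Num.Theory.
Local Open Scope ring_scope.

Theorem mainTheorem3 (R : rcfType) (N k : nat) (lam : {ffun 'S_N -> R}) :
  choice_model lam -> supp_size lam = k -> (k <= N)%N ->
  Num.sqrt (1 - k%:R / N%:R) <= frob (Mmat lam - Dmat R N).
Proof.
move=> [lam0 lam1] hk kN.
set S := [set s : 'S_N | 0 < lam s].
have hS : #|S| = k by [].
have kpos : (0 < k)%N.
  rewrite lt0n; apply/negP => /eqP k0.
  have : \sum_(s : 'S_N) lam s = 0.
    apply: big1 => s _; apply/eqP; rewrite eq_le lam0 andbT.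
    have : s \notin S by rewrite -hS in k0; move/eqP: k0; rewrite cards_eq0 => /eqP ->; rewrite inE.
    by rewrite inE -leNgt.
  by rewrite lam1 => /eqP; rewrite oner_eq0.
have Npos : (0 < N)%N by apply: leq_trans kpos kN.
have NR : (N%:R : R) != 0 by rewrite pnatr_eq0 -lt0n.
rewrite /frob; apply: ler_wsqrtr.
have row : forall i : 'I_N, (N%:R ^+ 2 : R)^-1 *+ (N - k) <=
    \sum_(j < N) (Mmat lam - Dmat R N) i j ^+ 2.
  move=> i.
  set J := [set (s : {perm 'I_N}) i | s in S].
  have hJ : (#|J| <= k)%N by rewrite -hS leq_imset_card.
  rewrite (bigID (fun j => j \in J)) /=.
  apply: (@le_trans _ _ (\sum_(j < N | j \notin J) (Mmat lam - Dmat R N) i j ^+ 2)); last first.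
    by rewrite lerDr; apply: sumr_ge0 => j _; exact: sqr_ge0.
  have -> : \sum_(j < N | j \notin J) (Mmat lam - Dmat R N) i j ^+ 2
            = \sum_(j < N | j \notin J) (N%:R ^+ 2)^-1.
    apply: eq_bigr => j hj.
    rewrite !mxE.
    have -> : \sum_(s : 'S_N) lam s * (s i == j)%:R = 0.
      apply: big1 => s _.
      case: (boolP (s \in S)) => hs.
        have : s i != j by apply: contraNneq hj => <-; apply: imset_f.
        by move/negbTE => ->; rewrite mulr0.
      have : lam s = 0 by apply/eqP; rewrite eq_le lam0 andbT leNgt; move: hs; rewrite inE.
      by move=> ->; rewrite mul0r.
    by rewrite sub0r sqrrN exprVn.
  rewrite sumr_const.
  have -> : #|[pred j : 'I_N | j \notin J]| = (N - #|J|)%N.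
    have -> : #|[pred j : 'I_N | j \notin J]| = #|~: J| by apply: eq_card => j; rewrite !inE.
    by rewrite -[X in (X - _)%N](card_ord N) -(cardsC J) addKn.
  rewrite -[_ *+ (N - k)]mulr_natl -[_ *+ (N - #|J|)]mulr_natl; apply: ler_wpM2r; first by rewrite invr_ge0 exprn_ge0 // ler0n.
  by rewrite ler_nat leq_sub2l.
apply: le_trans (ler_sum _ (fun i _ => row i)).
rewrite sumr_const card_ord -mulrnA.
rewrite -[_ *+ ((N - k) * N)]mulr_natl natrM natrB // expr2 invfM.
rewrite [X in _ <= X]mulrA -[X in _ <= X * _]mulrA mulfV // mulr1 mulrBl mulfV //.
Qed.
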